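(* Fix positive integers $n$ and $k$. Among all sequences $(a_1,\dots,a_k)$ of positive integers with $\sum_{i=1}^k a_i=n$ that arise as the sequence of step sizes in the construction of some $k$-atom on $n$ vertices, every sequence minimizing $\sum_{1\le i<j\le k}\sqrt{a_i/a_j}$ is non-decreasing.
   Context: $k$-atoms are built recursively in $k$ steps: step $1$ creates a single vertex ($K_1$, the only $1$-atom). At step $i+1$, from an $i$-atom $A_i$ one obtains an $(i+1)$-atom by adding a new independent set $I$ such that each vertex of $A_i$ has exactly one neighbor in $I$ and each vertex of $I$ has at least one neighbor in $A_i$. The step sizes are $a_1=1$ and $a_{i+1}=|I|$ for the set added at step $i+1$, so that $\sum_i a_i$ is the number of vertices of the resulting $k$-atom. *)

(* Defs.v *)
From HB Require Import structures.
From mathcomp Require Import all_boot all_order all_algebra.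
From mathcomp Require Import reals.
Set Implicit Arguments. Unset Strict Implicit. Unset Printing Implicit Defensive.
Import Order.TTheory GRing.Theory Num.Theory.

(* Step sizes a = [:: a_1; ...; a_k] are stored 0-indexed: a_{i+1} = nth 0 a i.
   Vertices of the atom are the naturals 0 .. (sumn a) - 1; the vertices added
   at (0-indexed) step j form the block [pre a j, pre a j.+1), where
   pre a j = a_1 + ... + a_j.  Any k-atom is isomorphic to one labelled this
   way, so this labelling loses no generality. *)
Definition pre (a : seq nat) (j : nat) : nat := \sum_(i < j) nth 0 a i.

Definition in_block (a : seq nat) (j v : nat) : bool := (pre a j <= v) && (v < pre a j.+1).

Definition atom_construction (a : seq nat) (e : rel nat) : Prop :=
  symmetric e /\
      nth 0 a 0 = 1 /\
      (forall u v, e u v -> (u < sumn a) && (v < sumn a)) /\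
      (forall j u v, j < size a -> in_block a j u -> in_block a j v -> ~~ e u v) /\
      (forall j u, 0 < j < size a -> u < pre a j ->
         exists! v, in_block a j v /\ e u v) /\
      (forall j v, 0 < j < size a -> in_block a j v ->
         exists u, u < pre a j /\ e u v).

Definition atom_steps (a : seq nat) : Prop := exists e : rel nat, atom_construction a e.

Definition cost (R : realType) (a : seq nat) : R :=
  (\sum_(i < size a) \sum_(j < size a | (i < j)%N)
      Num.sqrt ((nth 0 a i)%:R / (nth 0 a j)%:R))%R.

(* Main.v *)
Require Import Defs.
From HB Require Import structures.
From mathcomp Require Import all_boot all_order all_algebra.
From mathcomp Require Import reals.
From mathcomp Require Import lra zify.
Import Order.TTheory GRing.Theory Num.Theory.

Lemma preS a j : pre a j.+1 = pre a j + nth 0 a j.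
Proof. by rewrite /pre big_ord_recr. Qed.

Lemma preE a j : pre a j = sumn (take j a).
Proof.
elim: j => [|j IH]; first by rewrite /pre big_ord0 take0.
rewrite preS IH; case: (ltnP j (size a)) => hj.
  by rewrite (take_nth 0 hj) -cats1 sumn_cat /= addn0.
by rewrite nth_default // !take_oversize ?addn0 //; exact: leqW.
Qed.

Lemma pre_mono a j j' : j <= j' -> pre a j <= pre a j'.
Proof.
move=> /subnKC <-; elim: (j' - j) => [|d IH]; first by rewrite addn0.
by rewrite addnS preS; apply: leq_trans IH (leq_addr _ _).
Qed.

Lemma pre_size a : pre a (size a) = sumn a.
Proof. by rewrite preE take_size. Qed.

Lemma block_uniq a j j' v : in_block a j v -> in_block a j' v -> j = j'.
Proof.
rewrite /in_block => /andP[h1 h2] /andP[h3 h4].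
case: (ltngtP j j') => // h.
  have := pre_mono a _ _ h; lia.
have := pre_mono a _ _ h; lia.
Qed.

Definition g a u v := has (fun j => (u < pre a j) && in_block a j v &&
   (v == pre a j + minn u (nth 0 a j).-1)) (iota 0 (size a)).

Lemma g_blocks a j u v : in_block a j u -> in_block a j v -> ~~ g a u v.
Proof.
move=> hu hv; apply/hasP => -[j' _ /andP[/andP[h1 h2] _]].
have := block_uniq _ _ _ _ hv h2 => eq; subst j'.
move: hu; rewrite /in_block; lia.
Qed.

Lemma suff_atom a : nth 0 a 0 = 1 -> all (fun x => 0 < x) a ->
  (forall j, 0 < j < size a -> nth 0 a j <= pre a j) -> atom_steps a.
Proof.
move=> h0 hpos hf.
exists (fun u v => g a u v || g a v u).
split; first by move=> u v /=; rewrite orbC.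
split=> //.
split.
  have H : forall u v, g a u v -> (u < sumn a) && (v < sumn a).
    move=> u v /hasP[j]; rewrite mem_iota add0n => hj /andP[/andP[h1 h2] _].
    have m1 := pre_mono a _ _ (ltnW hj); have m2 := pre_mono a _ _ hj.
    move: h2; rewrite /in_block pre_size in m1 m2 *; lia.
  by move=> u v /orP[/H|/H]; [|rewrite andbC].
split.
  by move=> j u v hj hu hv; rewrite negb_or (g_blocks _ _ _ _ hu hv) (g_blocks _ _ _ _ hv hu).
split.
  move=> j u /andP[hj0 hj] hu.
  have hA : 0 < nth 0 a j by apply: (all_nthP 0 hpos).
  exists (pre a j + minn u (nth 0 a j).-1); split.
    split.
      rewrite /in_block preS; lia.
    apply/orP; left; apply/hasP; exists j; first by rewrite mem_iota.
    rewrite hu eqxx /= andbT /in_block preS; lia.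
  move=> v' [hb /orP[]] /hasP[j' _ /andP[/andP[h1 h2] /eqP h3]].
    by have := block_uniq _ _ _ _ hb h2 => eq; subst j'.
  move: hb h2; rewrite /in_block; lia.
move=> j v /andP[hj0 hj] hv.
have hfj : nth 0 a j <= pre a j by apply: hf; rewrite hj0 hj.
exists (v - pre a j); split.
  move: hv; rewrite /in_block preS; lia.
apply/orP; left; apply/hasP; exists j; first by rewrite mem_iota.
rewrite hv andbT; move: hv hfj; rewrite /in_block preS => hv hfj.
apply/andP; split; first lia.
apply/eqP; lia.
Qed.

Lemma nec_atom a e : atom_construction a e ->
  forall j, 0 < j < size a -> nth 0 a j <= pre a j.
Proof.
move=> [_ [_ [_ [_ [huniq hsurj]]]]] j hj.
set P := pre a j; set A := nth 0 a j.
have hb : forall v, v < A -> in_block a j (P + v).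
  by move=> v hv; rewrite /in_block preS -/P -/A; lia.
have hh : forall v, v < A -> has (fun u => e u (P + v)) (iota 0 P).
  move=> v /hb /(hsurj _ _ hj) [u [hu he]].
  by apply/hasP; exists u => //; rewrite mem_iota.
pose f v := find (fun u => e u (P + v)) (iota 0 P).
have hf1 : forall v, v < A -> f v < P.
  by move=> v /hh; rewrite has_find size_iota.
have hf2 : forall v, v < A -> e (f v) (P + v).
  move=> v hv; have := nth_find 0 (hh v hv).
  by rewrite nth_iota ?hf1 // add0n.
have <- : size (map f (iota 0 A)) = A by rewrite size_map size_iota.
rewrite -(size_iota 0 P); apply: uniq_leq_size.
  rewrite map_inj_in_uniq ?iota_uniq // => v1 v2.
  rewrite !mem_iota !add0n /= => h1 h2 eqf.
  have [v0 [_ hv0]] := huniq j (f v1) hj (hf1 _ h1).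
  have e1 := hv0 (P + v1) (conj (hb _ h1) (hf2 _ h1)).
  have e2 := hv0 (P + v2) (conj (hb _ h2) _).
  rewrite eqf in e2; have := e2 (hf2 _ h2); lia.
move=> u /mapP[v]; rewrite !mem_iota !add0n => hv ->.
by rewrite hf1.
Qed.

Section C.
Local Open Scope ring_scope.
Variable R : realType.
Definition sq (x y : nat) : R := Num.sqrt (x%:R / y%:R).
Fixpoint costL (l : seq nat) : R :=
  match l with [::] => 0 | x :: l' => \sum_(z <- l') sq x z + costL l' end.

Lemma costE a : cost R a = costL a.
Proof.
elim: a => [|x l IH]; first by rewrite /cost big_ord0.
rewrite /= -IH /cost /=.
under eq_bigr do rewrite big_mkcond /=.
rewrite big_ord_recl /= big_ord_recl /= add0r.
congr (_ + _).
  rewrite (big_nth 0) big_mkord; apply: eq_bigr => j _.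
  by rewrite /sq.
apply: eq_bigr => i _; rewrite big_ord_recl /= add0r.
rewrite [RHS]big_mkcond; apply: eq_bigr => j _.
by rewrite /bump /= !add1n ltnS.
Qed.

Lemma costL_swap p x y q :
  costL (p ++ y :: x :: q) = costL (p ++ x :: y :: q) + sq y x - sq x y.
Proof.
elim: p => [|w p IH] /=.
  rewrite !big_cons; lra.
rewrite IH (perm_big (p ++ x :: y :: q)); first lra.
by rewrite perm_cat2l; apply/permP => P /=; rewrite addnCA.
Qed.
End C.

Lemma swap_feasible p x y q : 0 < size p -> y < x ->
  (forall j, 0 < j < size (p ++ x :: y :: q) ->
     nth 0 (p ++ x :: y :: q) j <= pre (p ++ x :: y :: q) j) ->
  forall j, 0 < j < size (p ++ y :: x :: q) ->
     nth 0 (p ++ y :: x :: q) j <= pre (p ++ y :: x :: q) j.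
Proof.
move=> hp hyx H.
have Hp : x <= sumn p.
  have := H (size p); rewrite preE take_cat ltnn subnn take0 cats0 nth_cat ltnn subnn /=.
  by apply; rewrite size_cat /= hp; lia.
move=> j hj; have := H j; rewrite !preE !take_cat !nth_cat !size_cat /= in hj *.
case: (ltnP j (size p)) => hjp; first by apply; lia.
move=> Hj; have {}Hj := Hj hj; move: Hj.
have -> : j = size p + (j - size p) by lia.
rewrite addKn; case: (j - size p) => [|[|d]] /=.
- rewrite sumn_cat /=; lia.
- rewrite !sumn_cat /= => _; exact: leq_trans Hp (leq_addr _ _).
by rewrite !sumn_cat /= (addnCA x y).
Qed.

Theorem lemma4 (R : realType) (n k : nat) (hn : (0 < n)%N) (hk : (0 < k)%N)
  (a : seq nat) :
  size a = k -> all (fun x => 0 < x)%N a -> sumn a = n -> atom_steps a ->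
  (forall b : seq nat, size b = k -> all (fun x => 0 < x)%N b -> sumn b = n ->
     atom_steps b -> (cost R a <= cost R b)%R) ->
  sorted leq a.
Proof.
move=> hs hpos hsum [e he] hmin.
have hfa := nec_atom _ _ he.
have h0 : nth 0 a 0 = 1 := he.2.1.
apply/(sortedP 0) => i hi; rewrite leqNgt; apply/negP => hlt.
have ha : a = take i a ++ nth 0 a i :: nth 0 a i.+1 :: drop i.+2 a.
  by rewrite -(drop_nth 0 hi) -(drop_nth 0 (ltnW hi)) cat_take_drop.
have hi0 : 0 < i.
  case: i hi hlt {ha} => // hi; rewrite h0 ltnS leqn0 => /eqP h1.
  by have := all_nthP 0 hpos 1 hi; rewrite h1.
have hp : size (take i a) = i by rewrite size_takel // ltnW // ltnW.
have hy : 0 < nth 0 a i.+1 by apply: (all_nthP 0 hpos).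
move: hlt hy hmin hfa h0 hpos hsum hs ha.
move: (take i a) (nth 0 a i) (nth 0 a i.+1) (drop i.+2 a) hp => p x y q hp.
move=> hlt hy hmin hfa h0 hpos hsum hs ha; subst a.
have hx : (0 < x)%N by apply: ltn_trans hlt.
have hsq : (sq R y x < sq R x y)%R.
  rewrite /sq ltr_sqrt ?divr_gt0 ?ltr0n //.
  have lt1 : (y%:R / x%:R < 1 :> R)%R by rewrite ltr_pdivrMr ?ltr0n // mul1r ltr_nat.
  have gt1 : (1 < x%:R / y%:R :> R)%R by rewrite ltr_pdivlMr ?ltr0n // mul1r ltr_nat.
  exact: lt_trans lt1 gt1.
have := hmin (p ++ y :: x :: q).
rewrite !costE costL_swap.
have hpb : all (fun x => 0 < x)%N (p ++ y :: x :: q).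
  by move: hpos; rewrite !all_cat /= => /andP[-> /and3P[-> -> ->]].
have -> : size (p ++ y :: x :: q) = k by rewrite -hs !size_cat.
have -> : sumn (p ++ y :: x :: q) = n by rewrite -hsum !sumn_cat /=; lia.
have hst : atom_steps (p ++ y :: x :: q).
  apply: suff_atom => //.
    by move: h0; rewrite !nth_cat hp hi0.
  apply: swap_feasible => //; first by rewrite hp.
move=> /(_ erefl hpb erefl hst); lra.
Qed.
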